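(* Let $m,k$ be natural numbers. If the hereditary representation in base $k+1$ of the $k$-th term $G(k,m)$ of the Goodstein sequence $G(m)$ contains more than one non-zero term, then $G(k+1,m)\ge G(k,m)$.
   Context: For a natural number base $b>1$, the hereditary representation $m\langle b\rangle$ of $m$ is $\sum_{i=0}^{l} a_i b^{i}$ with $0\le a_i<b$, $a_l\ne0$, each exponent itself written in hereditary representation in base $b$, recursively; its terms are the summands $a_i b^i$, and it contains more than one non-zero term if $a_i\neq0$ for at least two indices $i$. $m\langle b\rangle''$ is obtained by syntactically replacing every $b$ by $b+1$ in $m\langle b\rangle$. The Goodstein sequence $G(m)=\{m, m''-1, (m''-1)''-1,\dots\}$ starts from $m$ in base $2$; its $n$-th term is $G(n,m)$, with $G(1,m)=m$ in base $2$, $G(k,m)$ written in base $k+1$, and $G(k+1,m)=G(k,m)\langle k+1\rangle''-1$. *)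

(* Defs.v *)
From mathcomp Require Import all_boot.
Set Implicit Arguments. Unset Strict Implicit. Unset Printing Implicit Defensive.

Definition digit (b m i : nat) : nat := (m %/ b ^ i) %% b.

(* For b > 1 every digit of index i >= m.+1 is zero (b^i > m), so
   m = \sum_(i < m.+1) digit b m i * b ^ i.  The function below computes the
   value of m<b>'' : the hereditary base-b representation of m with every b
   syntactically replaced by b+1.  The fuel m.+1 suffices since a nonzero
   digit a_i has i < b^i <= m, so exponents are evaluated with enough fuel. *)
Fixpoint bump_aux (fuel b m : nat) {struct fuel} : nat :=
  match fuel with
  | 0 => 0
  | f.+1 => \sum_(i < m.+1)
      (if digit b m i == 0 then 0 else digit b m i * b.+1 ^ (bump_aux f b i))
  end.

Definition bump (b m : nat) : nat := bump_aux m.+1 b m.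

(* Goodstein sequence: G 1 m = m (written in base 2); G k m is written in
   base k+1 and G (k+1) m = G(k,m)<k+1>'' - 1 (truncated subtraction, the
   sequence being stationary at 0 once it reaches 0).  G 0 m is not part of
   the sequence; it is set to m for definiteness and never used. *)
Fixpoint G (k m : nat) : nat :=
  match k with
  | 0 => m
  | 0.+1 => m
  | (k'.+1 as k).+1 => bump k.+1 (G k m) - 1
  end.

(* The hereditary representation of m in base b contains more than one
   non-zero term: two distinct indices with nonzero (top-level) digits. *)
Definition many_terms (b m : nat) : Prop :=
  exists i j, i <> j /\ digit b m i != 0 /\ digit b m j != 0.

(* Main.v *)
Require Import Defs.
From mathcomp Require Import all_boot.
From mathcomp Require Import zify.

Lemma digit_sum_aux b m N : 1 < b ->
  \sum_(i < N) digit b m i * b ^ i + b ^ N * (m %/ b ^ N) = m.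
Proof.
move=> hb; elim: N => [|N IH]; first by rewrite big_ord0 expn0 divn1 mul1n.
rewrite big_ord_recr /= expnS (mulnC b) divnMA /digit.
move: IH; set S := \sum_(i < N) _; set q := m %/ b ^ N; set P := b ^ N.
move=> IH; have E := divn_eq q b.
move: E IH; set x := q %/ b; set y := q %% b => E IH.
rewrite E in IH; nia.
Qed.

Lemma digit_sum b m : 1 < b -> \sum_(i < m.+1) digit b m i * b ^ i = m.
Proof.
move=> hb; have := @digit_sum_aux b m m.+1 hb.
have hlt : m < b ^ m.+1.
  apply: leq_trans (ltn_expl m hb) _; apply: leq_pexp2l => //; exact: ltnW.
by rewrite (divn_small hlt) muln0 addn0.
Qed.

Lemma digit_nz_lt b m i : 1 < b -> digit b m i != 0 -> i < m.
Proof.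
move=> hb hd.
have h0 : 0 < m %/ b ^ i.
  rewrite lt0n; apply/negP => /eqP e; move: hd; by rewrite /digit e mod0n.
rewrite divn_gt0 ?expn_gt0 ?(ltnW hb) // in h0.
exact: leq_trans (ltn_expl _ hb) h0.
Qed.

Lemma bump_ge b f m : 1 < b -> m < f -> m <= bump_aux f b m.
Proof.
move=> hb; elim: f m => [//|f IH] m hm /=.
rewrite {1}(esym (@digit_sum b m hb)); apply: leq_sum => i _.
case: eqP => [->|/eqP hd]; first by [].
rewrite leq_mul2l; apply/orP; right.
apply: (@leq_trans (b.+1 ^ i)); first by case: i {hd} => [[|i] ?] //; rewrite leq_exp2r.
apply: leq_pexp2l => //; apply: IH.
have := @digit_nz_lt b m i hb hd; lia.
Qed.

Lemma bump_auxS f b m : bump_aux f.+1 b m = \sum_(i < m.+1)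
      (if digit b m i == 0 then 0 else digit b m i * b.+1 ^ (bump_aux f b i)).
Proof. by []. Qed.

Lemma bump_gt b n : 1 < b -> many_terms b n -> n < Defs.bump b n.
Proof.
move=> hb [i [j [hij [hi hj]]]].
have [t [ht0 htd]] : exists t, 0 < t /\ digit b n t != 0.
  case: i hij hi => [|i] hij hi; last by exists i.+1.
  case: j hij hj => [|j] hij hj; first by [].
  by exists j.+1.
have htn := @digit_nz_lt b n t hb htd.
pose o : 'I_n.+1 := Ordinal (ltnW htn : t < n.+1).
rewrite /Defs.bump bump_auxS.
rewrite {1}(esym (@digit_sum b n hb)).
rewrite (bigD1 o) //= [ltnRHS](bigD1 o) //=.
rewrite -addSn; apply: leq_add; last first.
  apply: leq_sum => i0 _.
  case: eqP => [->|/eqP hd]; first by [].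
  rewrite leq_mul2l; apply/orP; right.
  apply: (@leq_trans (b.+1 ^ i0)); first by case: i0 {hd} => [[|i0] ?] //; rewrite leq_exp2r.
  apply: leq_pexp2l => //; apply: bump_ge => //.
  have := @digit_nz_lt b n i0 hb hd; lia.
rewrite (negbTE htd) ltn_mul2l lt0n htd /=.
apply: (@leq_trans (b.+1 ^ t)); first by rewrite ltn_exp2r.
apply: leq_pexp2l => //; exact: bump_ge.
Qed.

Theorem lemma2 (m k : nat) :
  1 <= k -> many_terms k.+1 (G k m) -> G k m <= G k.+1 m.
Proof.
case: k => [//|k] _ H.
have -> : G k.+2 m = Defs.bump k.+2 (G k.+1 m) - 1 by [].
have := @bump_gt k.+2 _ (isT : 1 < k.+2) H; lia.
Qed.
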